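(* Let $\boldsymbol X \in \mathbb{R}^{n\times d}$, $\boldsymbol y \in \mathbb{R}^n$, $\boldsymbol M = \boldsymbol X^\top \boldsymbol X$, $\boldsymbol r = \boldsymbol X^\top \boldsymbol y$. Assume (A1) $\boldsymbol r > \mathbf 0$ and (A2) $M_{ij}\le 0$ for all $i\neq j$. Let $\boldsymbol C>\mathbf 0$, $\boldsymbol k>\mathbf 0$ in $\mathbb{R}^d$, and for $\varepsilon>0$ let $\boldsymbol\theta^{(\varepsilon)}(t)$ solve $$\frac{\mathrm d \theta_i}{\mathrm d t} = \theta_i\Big(r_i - \sum_{j=1}^d M_{ij}\theta_j\Big),\quad i=1,\dots,d,$$ with $\boldsymbol\theta^{(\varepsilon)}(0) = (C_1\varepsilon^{k_1},\dots,C_d\varepsilon^{k_d})$. Then there exists $\varepsilon_0>0$ such that for all $\varepsilon\in(0,\varepsilon_0]$ and all $i\in\{1,\dots,d\}$, $t\mapsto\theta_i^{(\varepsilon)}(t)$ is nondecreasing on $[0,\infty)$.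
   Context: Vector inequalities are coordinatewise. *)

(* Defs.v *)
From HB Require Import structures.
From mathcomp Require Import all_boot all_order all_algebra.
From mathcomp Require Import all_classical all_reals all_analysis.
Set Implicit Arguments. Unset Strict Implicit. Unset Printing Implicit Defensive.
Import Order.TTheory GRing.Theory Num.Theory.
Local Open Scope ring_scope.

Definition lv_rhs (R : realType) (n d : nat) (X : 'M[R]_(n, d)) (y : 'cV[R]_n)
  (th : 'I_d -> R) (i : 'I_d) : R :=
  th i * ((X^T *m y) i ord0 - \sum_(j < d) (X^T *m X) i j * th j).

(* Main.v *)
Require Import Defs.
From HB Require Import structures.
From mathcomp Require Import all_boot all_order all_algebra.
From mathcomp Require Import all_classical all_reals all_analysis.
Import Order.TTheory GRing.Theory Num.Theory.
Import numFieldNormedType.Exports.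
Local Open Scope classical_set_scope.
Local Open Scope ring_scope.
From mathcomp Require Import lra.
Set Warnings "-all".

Section H.
Context {R : realType}.

Lemma near_right_ex (x : R) (P : R -> Prop) :
  (\forall y \near x^'+, P y) ->
  exists2 e : R, 0 < e & forall y, x < y -> y < x + e -> P y.
Proof.
rewrite /at_right near_withinE => -[e /= e0 He].
exists e => // y xy ye; apply: He => //=.
by rewrite distrC ger0_norm ?subr_ge0 ?ltW//; lra.
Qed.

Lemma is_derive_lin (d : nat) (c : 'I_d -> R) (h : 'I_d -> R -> R)
  (dh : 'I_d -> R) (x a : R) :
  (forall j, is_derive x 1 (h j) (dh j)) ->
  is_derive x 1 (fun t => a - \sum_(j < d) c j * h j t)
    (- \sum_(j < d) c j * dh j).
Proof.
move=> hd.
have H1 : is_derive x 1 (\sum_(j < d) (c j \*: h j)) (\sum_(j < d) c j *: dh j).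
  by apply: is_derive_sum => j; apply: is_deriveZ.
have H2 := is_deriveB (is_derive_cst a x 1) H1.
have -> : (fun t => a - \sum_(j < d) c j * h j t) =
   (cst a - \sum_(j < d) (c j \*: h j)).
  by apply/funext => t; rewrite /= fct_sumE.
by apply: is_derive_eq H2 _; rewrite sub0r.
Qed.

Lemma mono_seg (f df : R -> R) (a b : R) : a <= b ->
  (forall x, a < x -> x < b -> is_derive x 1 f (df x)) ->
  (forall x, a < x -> x < b -> 0 <= df x) ->
  (a < b -> {within `[a, b], continuous f}) -> f a <= f b.
Proof.
rewrite le_eqVlt => /predU1P[-> //|ab] hd hp hc.
have hd' : forall x, x \in `]a, b[%R -> is_derive x 1 f (df x).
  by move=> x /[!in_itv] /= /andP[? ?]; apply: hd.
have [c /[!in_itv] /= /andP[ac cb] E] := MVT ab hd' (hc ab).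
by rewrite -subr_ge0 E mulr_ge0 ?hp// subr_ge0 ltW.
Qed.

Definition good (f : R -> R) :=
  (forall t : R, 0 < t -> f x @[x --> t] --> f t) /\ f x @[x --> 0^'+] --> f 0.

Lemma good_right (f : R -> R) (t : R) : good f -> 0 <= t -> f x @[x --> t^'+] --> f t.
Proof.
move=> [h1 h0]; rewrite le_eqVlt => /predU1P[<- //|t0].
exact/cvg_at_right_filter/h1.
Qed.

Lemma good_within (f : R -> R) (a b : R) : good f -> 0 <= a -> a < b ->
  {within `[a, b], continuous f}.
Proof.
move=> gf a0 ab; apply/continuous_within_itvP => //; split.
- move=> x /[!in_itv] /= /andP[ax _]; exact: gf.1 (le_lt_trans a0 ax).
- exact: good_right.
- exact/cvg_at_left_filter/gf.1/(le_lt_trans a0 ab).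
Qed.

Lemma good_cst (c : R) : good (fun _ => c).
Proof. by split => *; apply: cvg_cst. Qed.

Lemma good_id : good (@id R).
Proof. split; [move=> *; exact: cvg_id| exact: cvg_at_right_filter cvg_id]. Qed.

Lemma good_mul (f g : R -> R) : good f -> good g -> good (fun x => f x * g x).
Proof.
move=> [f1 f0] [g1 g0]; split; [move=> t t0; exact: cvgM (f1 t t0) (g1 t t0)|exact: cvgM].
Qed.

Lemma good_sub (f g : R -> R) : good f -> good g -> good (fun x => f x - g x).
Proof.
move=> [f1 f0] [g1 g0]; split; [move=> t t0; exact: cvgB (f1 t t0) (g1 t t0)|exact: cvgB].
Qed.

Lemma good_sum (d : nat) (h : 'I_d -> R -> R) :
  (forall j, good (h j)) -> good (fun x => \sum_(j < d) h j x).
Proof.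
elim: d h => [|d IH] h hg.
  under eq_fun do rewrite big_ord0; exact: good_cst.
under eq_fun do rewrite big_ord_recr /=.
have := IH (fun j => h (widen_ord (leqnSn d) j)) (fun j => hg _).
move=> [a1 a0]; have [b1 b0] := hg ord_max.
split; [move=> t t0; exact: cvgD (a1 t t0) (b1 t t0)|exact: cvgD].
Qed.

Lemma good_comp (k f : R -> R) : continuous k -> good f -> good (k \o f).
Proof.
move=> kc [f1 f0]; split; [move=> t t0|].
- exact: (continuous_cvg _ (kc (f t)) (f1 t t0)).
- exact: (continuous_cvg _ (kc (f 0)) f0).
Qed.

Lemma is_derive_good (f : R -> R) : (forall t, 0 < t -> derivable f t 1) ->
  f x @[x --> 0^'+] --> f 0 -> good f.
Proof.
move=> hd h0; split => // t t0.
exact/differentiable_continuous/derivable1_diffP/hd.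
Qed.

Lemma is_derive_expK (K x : R) :
  is_derive x 1 (fun t => expR (K * t)) (expR (K * x) * K).
Proof.
have h1 : is_derive x 1 (K \*: (@id R)) (K *: (1:R)).
  by apply: is_deriveZ; exact: is_derive_id.
have h2 := is_derive1_comp (is_derive_expR ((K \*: (@id R)) x)) h1.
by apply: is_derive_eq h2 _; rewrite /= /GRing.scale /= mulr1.
Qed.

End H.

Theorem lemma1 (R : realType) (n d : nat) (X : 'M[R]_(n, d)) (y : 'cV[R]_n)
  (C k : 'I_d -> R) :
  (forall i : 'I_d, 0 < (X^T *m y) i ord0) ->
  (forall i j : 'I_d, i != j -> (X^T *m X) i j <= 0) ->
  (forall i, 0 < C i) -> (forall i, 0 < k i) ->
  exists2 eps0 : R, 0 < eps0 &
    forall eps : R, 0 < eps -> eps <= eps0 ->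
    forall theta : 'I_d -> R -> R,
      (forall i, theta i 0 = C i * powR eps (k i)) ->
      (forall i, theta i x @[x --> 0^'+] --> theta i 0) ->
      (forall i (t : R), 0 < t ->
         is_derive t 1 (theta i) (lv_rhs X y (fun j => theta j t) i)) ->
      forall i (s t : R), 0 <= s -> s <= t -> theta i s <= theta i t.
Proof.
move=> hr hM hC hk.
pose r i := (X^T *m y) i ord0.
pose M i j := (X^T *m X) i j.
have sumle : forall j (v : 'I_d -> R), (forall l, 0 <= v l) ->
    \sum_(l < d) M j l * v l <= M j j * v j.
  move=> j v v0; rewrite (bigD1 j) //= -[leRHS]addr0 lerD2l.
  apply: sumr_le0 => l lj; apply: mulr_le0_ge0 => //; apply: hM.
  by rewrite eq_sym.
have : \forall a \near 0^'+, forall i, M i i * (C i * a `^ k i) < r i.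
  apply: filter_forall => i.
  have cv : (fun a => M i i * (C i * a `^ k i)) @ 0^'+ --> M i i * (C i * 0).
    apply: cvgM; first exact: cvg_cst.
    apply: cvgM; first exact: cvg_cst.
    exact: powR_cvg0.
  rewrite !mulr0 in cv; exact: cvgr_lt cv _ (hr i).
move=> /near_right_ex [e e0 He].
exists (e / 2); first by lra.
move=> eps eps0 epse theta th0 thc thd.
pose g i t := r i - \sum_(j < d) M i j * theta j t.
have lvE : forall j t, lv_rhs X y (fun j => theta j t) j = theta j t * g j t.
  by [].
have gth : forall j, good (theta j).
  move=> j; apply: is_derive_good (thc j) => t t0.
  exact: (@ex_derive _ _ _ _ _ _ _ (thd j t t0)).
have gg : forall j, good (g j).
  move=> j; apply: (@good_sub _ (fun _ => r j)
     (fun t => \sum_(l < d) M j l * theta l t)); first exact: good_cst.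
  apply: (@good_sum _ d (fun l t => M j l * theta l t)) => l.
  exact: (@good_mul _ (fun _ => M j l) (theta l) (good_cst _) (gth l)).
have gder : forall j (t : R), 0 < t ->
    is_derive t 1 (g j) (- \sum_(l < d) M j l * (theta l t * g l t)).
  move=> j t t0; apply: is_derive_lin => l; rewrite -lvE; exact: thd.
pose P (t : R) := forall j, 0 < theta j t /\ 0 < g j t.
have P0 : P 0.
  move=> j; split; first by rewrite th0 mulr_gt0 ?powR_gt0.
  rewrite /g subr_gt0; apply: (le_lt_trans (sumle j _ _)).
    by move=> l; rewrite th0 mulr_ge0 ?powR_ge0 // ltW.
  rewrite th0; apply: He => //; lra.
have thmono : forall j (a b : R), 0 <= a -> a <= b ->
    (forall s, 0 <= s -> s < b -> P s) -> theta j a <= theta j b.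
  move=> j a b a0 ab Hs.
  apply: (@mono_seg _ _ (fun x => theta j x * g j x)) => //.
  - move=> x ax xb; rewrite -lvE; apply: thd; exact: le_lt_trans ax.
  - move=> x ax xb; have [h1 h2] := Hs x (ltW (le_lt_trans a0 ax)) xb j.
    by rewrite mulr_ge0 // ltW.
  - by move=> lt; apply: good_within (gth j) a0 lt.
have step : forall tau, 0 <= tau -> (forall s, 0 <= s -> s < tau -> P s) -> P tau.
  move=> tau tau0 Hs j; split.
    exact: lt_le_trans (P0 j).1 (thmono j 0 tau (lexx _) tau0 Hs).
  have [K hK] : exists K, K = `|M j j| * theta j tau by eexists.
  pose F x := expR (K * x) * g j x.
  pose DF x := expR (K * x) * (- \sum_(l < d) M j l * (theta l x * g l x))
                + g j x * (expR (K * x) * K).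
  have : F 0 <= F tau.
    apply: (@mono_seg _ F DF) => //.
    - move=> x x0 xt.
      have h := is_deriveM (is_derive_expK K x) (gder j x x0).
      apply: is_derive_eq h _.
      by rewrite /DF /GRing.scale /= addrC.
    - move=> x x0 xt.
      have Px := Hs x (ltW x0) xt.
      have hle : \sum_(l < d) M j l * (theta l x * g l x) <= K * g j x.
        apply: le_trans (sumle j _ _) _.
          by move=> l; have [? ?] := Px l; rewrite mulr_ge0 // ltW.
        have [t0 g0] := Px j.
        have e1 : M j j * theta j x <= `|M j j| * theta j tau.
          apply: (le_trans (y := `|M j j| * theta j x)).
            by apply: ler_wpM2r; [exact: ltW | exact: ler_norm].
          apply: ler_wpM2l => //.
          exact: thmono j x tau (ltW x0) (ltW xt) Hs.
        by rewrite hK mulrA; apply: ler_wpM2r => //; exact: ltW.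
      rewrite /DF [g j x * _]mulrC -mulrA -mulrDr; apply: mulr_ge0.
        exact: ltW (expR_gt0 _).
      by rewrite addrC subr_ge0.
    - move=> lt; apply: good_within => //.
      apply: (@good_mul _ (fun x => expR (K * x)) (g j)) => //.
      apply: (@good_comp _ expR (fun x => K * x)).
        by move=> z; apply: continuous_expR.
      exact: (@good_mul _ (fun _ => K) id (good_cst _) good_id).
  rewrite /F mulr0 expR0 mul1r => H.
  have := lt_le_trans (P0 j).2 H.
  by rewrite pmulr_rgt0 // expR_gt0.
have Pall : forall t, 0 <= t -> P t.
  move=> T0 T00; apply: contrapT => nPT.
  pose S := [set t : R | 0 <= t /\ forall s, 0 <= s -> s <= t -> P s].
  have S0 : S 0.
    split => // s s0 s0'.
    have -> : s = 0 by apply/le_anti; rewrite s0 s0'.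
    exact: P0.
  have Sub : forall t, S t -> t <= T0.
    move=> t [t0 Ht]; rewrite leNgt; apply/negP => Tt.
    by apply: nPT; apply: Ht => //; exact: ltW.
  have hs : has_sup S by split; [exists 0 | exists T0 => t /Sub].
  pose tau := sup S.
  have tau0 : 0 <= tau := sup_upper_bound hs S0.
  have below : forall s, 0 <= s -> s < tau -> P s.
    move=> s s0 st.
    have ts : 0 < tau - s by rewrite subr_gt0.
    have [t [t0 Ht] lt] := sup_adherent ts hs.
    apply: Ht => //; rewrite -/tau in lt; apply: ltW; lra.
  have Ptau := step tau tau0 below.
  have : \forall s \near tau^'+, P s.
    apply: filter_forall => j.
    have h1 := @cvgr_gt _ _ _ _ (theta j) (theta j tau) (@good_right _ _ _ (gth j) tau0) 0 (Ptau j).1.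
    have h2 := @cvgr_gt _ _ _ _ (g j) (g j tau) (@good_right _ _ _ (gg j) tau0) 0 (Ptau j).2.
    by near=> x; split; near: x; [exact: h1 | exact: h2].
  move=> /near_right_ex [e' e'0 He'].
  have : S (tau + e' / 2).
    split; first lra.
    move=> s s0 sle; have [lt|ge] := ltP s tau; first exact: below.
    move: ge; rewrite le_eqVlt => /predU1P[<- //|lt]; apply: He' => //; lra.
  move/(sup_upper_bound hs); rewrite -/tau => bad; lra.
move=> i s t s0 st.
apply: (@mono_seg _ _ (fun x => theta i x * g i x)) => //.
- move=> x sx xt; rewrite -lvE; apply: thd; exact: le_lt_trans sx.
- move=> x sx xt; have [h1 h2] := Pall x (ltW (le_lt_trans s0 sx)) i.
  by rewrite mulr_ge0 // ltW.
- by move=> lt; apply: good_within (gth i) s0 lt.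
Unshelve. all: by end_near.
Qed.
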